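(* Let $(R,[\cdot_\lambda\cdot],\alpha,\beta)$ be a finitely generated BiHom-Lie conformal superalgebra, let $k,l,s,t\ge0$ be integers, and let $f\in\mathrm{QC}_{\alpha^k\beta^l}(R)$ and $g\in\mathrm{QC}_{\alpha^s\beta^t}(R)$ be homogeneous. Then $[f_\lambda g]$, given by $[f_\lambda g]_\theta=f_\lambda g_{\theta-\lambda}-(-1)^{|f||g|}g_{\theta-\lambda}f_\lambda$, is an $\alpha^{k+s}\beta^{l+t}$-generalized derivation of degree $|f|+|g|$ (coefficientwise in $\lambda$).
   Context: All spaces are over $\mathbb{C}$. For a $\mathbb{C}[\partial]$-module $V$, $V[\lambda]=\mathbb{C}[\lambda]\otimes V$. $|a|$ denotes the parity of a homogeneous element. Substitution $\lambda\mapsto-\lambda-\partial$ means: expand in powers of $\lambda$ and replace $\lambda$ by $-\lambda-\partial$, $\partial$ acting on the coefficients. A BiHom-Lie conformal superalgebra $(R,[\cdot_\lambda\cdot],\alpha,\beta)$ is a $\mathbb{Z}_2$-graded $\mathbb{C}[\partial]$-module $R$ with two commuting linear maps $\alpha,\beta$ and a $\mathbb{C}$-linear map $R\otimes R\to R[\lambda]$, $a\otimes b\mapsto[a_\lambda b]$, with $[R_{i\,\lambda}R_j]\subseteq R_{i+j}[\lambda]$, such that for all homogeneous $a,b,c$: (1) $\alpha\partial=\partial\alpha$, $\beta\partial=\partial\beta$; (2) $\alpha([a_\lambda b])=[\alpha(a)_\lambda\alpha(b)]$, $\beta([a_\lambda b])=[\beta(a)_\lambda\beta(b)]$; (3) $[(\partial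 a)_\lambda b]=-\lambda[a_\lambda b]$, $[a_\lambda(\partial b)]=(\partial+\lambda)[a_\lambda b]$; (4) $[\beta(a)_\lambda\alpha(b)]=-(-1)^{|a||b|}[\beta(b)_{-\lambda-\partial}\alpha(a)]$; (5) $[\alpha\beta(a)_\lambda[b_\mu c]]=[[\beta(a)_\lambda b]_{\lambda+\mu}\beta(c)]+(-1)^{|a||b|}[\beta(b)_\mu[\alpha(a)_\lambda c]]$. $gc(R)$ is the $\mathbb{Z}_2$-graded space of conformal linear maps $f$ (families $f_\lambda:R\to R[\lambda]$ with $f_\lambda\partial=(\partial+\lambda)f_\lambda$, $f_\lambda(R_\theta)\subseteq R_{\theta+|f|}[\lambda]$), and $\Omega=\{f\in gc(R): f_\lambda\alpha=\alpha f_\lambda,\ f_\lambda\beta=\beta f_\lambda\}$. For integers $k,l\ge0$, a homogeneous $f\in\Omega$ is an $\alpha^k\beta^l$-quasicentroid if $[f_\lambda(a)_{\lambda+\mu}\alpha^k\beta^l(b)]=(-1)^{|f||a|}[\alpha^k\beta^l(a)_\mu f_\lambda(b)]$ for all homogeneous $a,b\in R$; $\mathrm{QC}_{\alpha^k\beta^l}(R)$ is their span. A homogeneous $h\in\Omega$ is an $\alpha^k\beta^l$-generalized derivation if there exist $h',h''\in\Omega$ with $|h'|=|h''|=|h|$ and $[h_\lambda(a)_{\lambda+\mu}\alpha^k\beta^l(b)]+(-1)^{|h||a|}[\alpha^k\beta^l(a)_\mu h'_\lambda(b)]=h''_\lambda([a_\mu b])$ for all homogeneous $a,b\in R$. *)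

(* Defs.v *)
From HB Require Import structures.
From mathcomp Require Import all_boot all_algebra.
From mathcomp Require Import reals complex.
Set Implicit Arguments. Unset Strict Implicit. Unset Printing Implicit Defensive.
Import GRing.Theory.
Local Open Scope ring_scope.

(* Conventions.
   * Parity: elements of Z_2 are booleans (false = even, true = odd);
     the sum of parities is [addb].
   * A polynomial in one variable with coefficients in V (an element of V[lambda])
     is represented by the list of its coefficients [s : seq V]
     (s`_n = coefficient of lambda^n).  Polynomial identities (in lambda, mu, theta)
     are stated after evaluation at arbitrary scalars of the (infinite) base field,
     which is equivalent to the formal identities. *)

Section BiHomDefs.
Variables (C : fieldType) (V : lmodType C).

Definition ev (s : seq V) (x : C) : V := \sum_(i < size s) (x ^+ i) *: s`_i.

(* evaluation of s(lambda) after the substitution lambda |-> -lambda - d, at lambda := x: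
   sum_n (-x - d)^n (s_n) *)
Definition ev_subst (d : V -> V) (s : seq V) (x : C) : V :=
  \sum_(i < size s) iter i (fun v => - (x *: v) - d v) s`_i.

Definition sgn (b : bool) : C := (-1) ^+ b.

Definition linmap (h : V -> V) : Prop := forall c u v, h (c *: u + v) = c *: h u + h v.

(* par p v : v is homogeneous of parity p; V = V_0 (+) V_1 as C-vector spaces *)
Definition graded (par : bool -> V -> Prop) : Prop :=
  [/\ forall p, par p 0,
      forall p c u v, par p u -> par p v -> par p (c *: u + v),
      forall v, par false v -> par true v -> v = 0
    & forall v, exists v0 v1, [/\ par false v0, par true v1 & v = v0 + v1]].

Definition even_map (par : bool -> V -> Prop) (h : V -> V) : Prop :=
  linmap h /\ forall p v, par p v -> par p (h v).

Definition poly_act (d : V -> V) (p : {poly C}) (v : V) : V :=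
  \sum_(i < size p) p`_i *: iter i d v.

Definition fin_gen (d : V -> V) : Prop :=
  exists gens : seq V, forall v, exists ps : nat -> {poly C},
    v = \sum_(i < size gens) poly_act d (ps i) gens`_i.

(* BiHom-Lie conformal superalgebra (R = V, d = partial, [a_lambda b] = br a b) *)
Record isBiHomLCSA (d alpha beta : V -> V) (par : bool -> V -> Prop)
    (br : V -> V -> seq V) : Prop := {
  bh_graded : graded par;
  bh_d : even_map par d;
  bh_alpha : even_map par alpha;
  bh_beta : even_map par beta;
  bh_ab : forall v, alpha (beta v) = beta (alpha v);
  bh_brl : forall c a a' b x,
     ev (br (c *: a + a') b) x = c *: ev (br a b) x + ev (br a' b) x;
  bh_brr : forall c a b b' x,
     ev (br a (c *: b + b')) x = c *: ev (br a b) x + ev (br a b') x;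
  bh_brpar : forall i j a b n, par i a -> par j b -> par (addb i j) (br a b)`_n;
  bh_alpha_d : forall v, alpha (d v) = d (alpha v);
  bh_beta_d : forall v, beta (d v) = d (beta v);
  bh_alpha_br : forall a b x, alpha (ev (br a b) x) = ev (br (alpha a) (alpha b)) x;
  bh_beta_br : forall a b x, beta (ev (br a b) x) = ev (br (beta a) (beta b)) x;
  bh_dl : forall a b x, ev (br (d a) b) x = - (x *: ev (br a b) x);
  bh_dr : forall a b x, ev (br a (d b)) x = d (ev (br a b) x) + x *: ev (br a b) x;
  bh_skew : forall pa pb a b x, par pa a -> par pb b ->
     ev (br (beta a) (alpha b)) x
       = - (sgn (pa && pb) *: ev_subst d (br (beta b) (alpha a)) x);
  bh_jacobi : forall pa pb a b c x y, par pa a -> par pb b ->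
     ev (br (alpha (beta a)) (ev (br b c) y)) x
       = ev (br (ev (br (beta a) b) x) (beta c)) (x + y)
         + sgn (pa && pb) *: ev (br (beta b) (ev (br (alpha a) c) x)) y
}.

Definition conf_lin (d : V -> V) (par : bool -> V -> Prop) (p : bool)
    (f : V -> seq V) : Prop :=
  [/\ forall c a b x, ev (f (c *: a + b)) x = c *: ev (f a) x + ev (f b) x,
      forall a x, ev (f (d a)) x = d (ev (f a) x) + x *: ev (f a) x
    & forall q a n, par q a -> par (addb q p) (f a)`_n].

Definition commutes_ab (alpha beta : V -> V) (f : V -> seq V) : Prop :=
  forall a x, ev (f (alpha a)) x = alpha (ev (f a) x)
           /\ ev (f (beta a)) x = beta (ev (f a) x).

Definition in_Omega d alpha beta par p f : Prop :=
  conf_lin d par p f /\ commutes_ab alpha beta f.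

Definition abpow (alpha beta : V -> V) (k l : nat) (v : V) : V :=
  iter k alpha (iter l beta v).

Definition quasicentroid d alpha beta par br (k l : nat) (p : bool)
    (f : V -> seq V) : Prop :=
  in_Omega d alpha beta par p f /\
  forall pa pb a b x y, par pa a -> par pb b ->
    ev (br (ev (f a) x) (abpow alpha beta k l b)) (x + y)
      = sgn (p && pa) *: ev (br (abpow alpha beta k l a) (ev (f b) x)) y.

Definition gen_der d alpha beta par br (k l : nat) (p : bool)
    (h : V -> seq V) : Prop :=
  in_Omega d alpha beta par p h /\
  exists h' h'' : V -> seq V,
    [/\ in_Omega d alpha beta par p h', in_Omega d alpha beta par p h''
      & forall pa pb a b x y, par pa a -> par pb b ->
        ev (br (ev (h a) x) (abpow alpha beta k l b)) (x + y)
          + sgn (p && pa) *: ev (br (abpow alpha beta k l a) (ev (h' b) x)) y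
        = ev (h'' (ev (br a b) y)) x].

(* value of [f_lambda g]_theta (a) at lambda := x, theta := y:
   f_lambda g_{theta - lambda} (a) - (-1)^{|f||g|} g_{theta-lambda} f_lambda (a) *)
Definition gc_br_ev (pf pg : bool) (f g : V -> seq V) (a : V) (x y : C) : V :=
  ev (f (ev (g a) (y - x))) x - sgn (pf && pg) *: ev (g (ev (f a) x)) (y - x).

End BiHomDefs.

(* Main.v *)
Require Import Defs.
From HB Require Import structures.
From mathcomp Require Import all_boot all_algebra.
From mathcomp Require Import reals complex.
From mathcomp Require Import boolp.
Import GRing.Theory Num.Theory.
Local Open Scope ring_scope.
Local Open Scope complex_scope.
Section Gen.
Variables (C : numFieldType) (V : lmodType C).

Lemma lin0 {h : V -> V} : linmap h -> h 0 = 0.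
Proof.
move=> H; have := H 1 0 0; rewrite scaler0 addr0 scale1r => E.
by apply: (addrI (h 0)); rewrite addr0 -E.
Qed.

Lemma linD {h : V -> V} : linmap h -> forall u v, h (u + v) = h u + h v.
Proof. by move=> H u v; have := H 1 u v; rewrite !scale1r. Qed.

Lemma linZ {h : V -> V} : linmap h -> forall c u, h (c *: u) = c *: h u.
Proof. by move=> H c u; have := H c u 0; rewrite !addr0 lin0 // addr0. Qed.

Lemma lin_sum {h : V -> V} : linmap h -> forall n (F : 'I_n -> V),
  h (\sum_(i < n) F i) = \sum_(i < n) h (F i).
Proof.
move=> H n F; apply: (big_rec2 (fun a b => h a = b)); first exact: lin0.
by move=> i y1 y2 _ <-; rewrite linD.
Qed.

Lemma linN {h : V -> V} : linmap h -> forall u, h (- u) = - h u.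
Proof. by move=> H u; rewrite -scaleN1r linZ // scaleN1r. Qed.

Lemma linB {h : V -> V} : linmap h -> forall u v, h (u - v) = h u - h v.
Proof. by move=> H u v; rewrite linD // linN. Qed.

Lemma ev_nil x : ev ([::] : seq V) x = 0.
Proof. by rewrite /ev big_ord0. Qed.

Lemma ev_pad (s : seq V) M x : (size s <= M)%N ->
  ev s x = \sum_(i < M) x ^+ i *: s`_i.
Proof.
move=> H; rewrite /ev (big_ord_widen M (fun i => x ^+ i *: s`_i) H) big_mkcond.
apply: eq_bigr => i _; case: ifP => // /negbT; rewrite -leqNgt => le.
by rewrite nth_default // scaler0.
Qed.

Lemma ev_mkseq (c : nat -> V) N x : ev (mkseq c N) x = \sum_(i < N) x ^+ i *: c i.
Proof. by rewrite /ev size_mkseq; apply: eq_bigr => i _; rewrite nth_mkseq. Qed.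

Definition IsP N (p : C -> V) := exists w : nat -> V, forall x, p x = \sum_(i < N) x ^+ i *: w i.

Lemma IsP_ext {N p q} : IsP N p -> (forall x, p x = q x) -> IsP N q.
Proof. by move=> [w Hw] E; exists w => x; rewrite -E Hw. Qed.

Lemma IsP_mono {N M p} : (N <= M)%N -> IsP N p -> IsP M p.
Proof.
move=> le [w Hw]; exists (fun i => if (i < N)%N then w i else 0) => x.
rewrite Hw (big_ord_widen M (fun i => x ^+ i *: w i) le) big_mkcond.
by apply: eq_bigr => i _; case: ifP => //; rewrite scaler0.
Qed.

Lemma IsP_add {N p q} : IsP N p -> IsP N q -> IsP N (fun x => p x + q x).
Proof.
move=> [w Hw] [w' Hw']; exists (fun i => w i + w' i) => x.
by rewrite Hw Hw' -big_split; apply: eq_bigr => i _; rewrite scalerDr.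
Qed.

Lemma IsP_scale {N p} c : IsP N p -> IsP N (fun x => c *: p x).
Proof.
move=> [w Hw]; exists (fun i => c *: w i) => x.
by rewrite Hw scaler_sumr; apply: eq_bigr => i _; rewrite !scalerA mulrC.
Qed.

Lemma IsP_lin {N p h} : linmap h -> IsP N p -> IsP N (fun x => h (p x)).
Proof.
move=> Hh [w Hw]; exists (fun i => h (w i)) => x.
by rewrite Hw lin_sum //; apply: eq_bigr => i _; rewrite linZ.
Qed.

Lemma IsP_const v : IsP 1 (fun _ => v).
Proof. by exists (fun _ => v) => x; rewrite big_ord1 expr0 scale1r. Qed.

Lemma IsP_zero N : IsP N (fun _ => 0).
Proof. by exists (fun _ => 0) => x; rewrite big1 // => i _; rewrite scaler0. Qed.

Lemma IsP_mulx {N p} : IsP N p -> IsP N.+1 (fun x => x *: p x).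
Proof.
move=> [w Hw]; exists (fun i => if i is i'.+1 then w i' else 0) => x.
rewrite big_ord_recl scaler0 add0r Hw scaler_sumr; apply: eq_bigr => i _.
by rewrite scalerA exprS.
Qed.

Lemma IsP_sum {N n} (F : 'I_n -> C -> V) : (forall i, IsP N (F i)) ->
  IsP N (fun x => \sum_(i < n) F i x).
Proof.
elim: n F => [|n IH] F H.
  by apply: IsP_ext (IsP_zero N) _ => x; rewrite big_ord0.
have H1 := IH (fun i => F (widen_ord (leqnSn n) i)) (fun i => H _).
by apply: IsP_ext (IsP_add H1 (H ord_max)) _ => x; rewrite big_ord_recr.
Qed.

Lemma IsP_shift {N p} c : IsP N p -> IsP N.+1 (fun x => (x - c) *: p x).
Proof.
move=> H; apply: IsP_ext (IsP_add (IsP_mulx H) (IsP_mono (leqnSn N) (IsP_scale (- c) H))) _.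
by move=> x; rewrite scalerBl scaleNr.
Qed.

Lemma IsP_shiftn {N p} c i : IsP N p -> IsP (N + i) (fun x => (x - c) ^+ i *: p x).
Proof.
move=> H; elim: i => [|i IH].
  by apply: IsP_ext (IsP_mono (leq_addr _ _) H) _ => x; rewrite expr0 scale1r.
rewrite addnS; apply: IsP_ext (IsP_shift c IH) _ => x.
by rewrite scalerA exprS.
Qed.

Lemma IsP_cshiftn {N p} c i : IsP N p -> IsP (N + i) (fun x => (c - x) ^+ i *: p x).
Proof.
move=> H; apply: IsP_ext (IsP_scale ((-1) ^+ i) (IsP_shiftn c i H)) _ => x.
by rewrite scalerA -exprMn mulN1r opprB.
Qed.

Lemma IsP_ev (s : seq V) : IsP (size s) (fun x => ev s x).
Proof. by exists (fun i => s`_i) => x. Qed.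


Definition pts N : 'rV[C]_N := \row_(j < N) (j : nat)%:R.
Definition Vm N : 'M[C]_N := Vandermonde N (pts N).

Lemma Vm_unit N : Vm N \in unitmx.
Proof.
rewrite unitmxE det_Vandermonde unitfE; apply/prodf_neq0 => i _.
apply/prodf_neq0 => j ij; rewrite !mxE subr_eq0 eqr_nat.
by rewrite gtn_eqF.
Qed.

Definition coefP N (p : C -> V) (i : nat) : V :=
  \sum_(j < N) (\sum_(k < N | nat_of_ord k == i) invmx (Vm N) j k) *: p (pts N 0 j).

Lemma interp N (p : C -> V) : IsP N p -> forall x,
  p x = \sum_(i < N) x ^+ i *: coefP N p i.
Proof.
move=> [w Hw] x; rewrite Hw; apply: eq_bigr => i _; congr (_ *: _).
rewrite /coefP.
under eq_bigr => j _ do rewrite (big_pred1 i) ?val_eqE //.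
under eq_bigr => j _ do rewrite Hw scaler_sumr.
rewrite exchange_big /=.
have E : forall k : 'I_N, \sum_(j < N) invmx (Vm N) j i *: (pts N 0 j ^+ k *: w k)
   = ((Vm N *m invmx (Vm N)) k i) *: w k.
  move=> k; rewrite mxE scaler_suml; apply: eq_bigr => j _.
  by rewrite scalerA mulrC /Vm /Vandermonde !mxE.
under eq_bigr => k _ do rewrite E.
rewrite mulmxV ?Vm_unit // (bigD1 i) //= big1 ?addr0.
  by rewrite mxE eqxx scale1r.
by move=> k /negbTE nki; rewrite mxE nki scale0r.
Qed.

Definition toseq (p : C -> V) : seq V :=
  match pselect (exists K, IsP K p) with
  | left H => let K := projT1 (cid H) in mkseq (coefP K p) K
  | right _ => [::]
  end.

Lemma toseq_ev p : (exists K, IsP K p) -> forall y, ev (toseq p) y = p y.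
Proof.
move=> H y; rewrite /toseq; case: pselect => // H'.
case: (cid H') => K HK /=.
by rewrite ev_mkseq -interp.
Qed.

Lemma toseq_nth (Q : V -> Prop) p : Q 0 -> (forall c u v, Q u -> Q v -> Q (c *: u + v)) ->
  (forall y, Q (p y)) -> forall n, Q (toseq p)`_n.
Proof.
move=> Q0 QL Qp n; rewrite /toseq; case: pselect => H; last by rewrite nth_nil.
case: (cid H) => K HK /=.
case: (ltnP n K) => nK; last by rewrite nth_default ?size_mkseq.
rewrite nth_mkseq // /coefP; elim/big_ind: _ => //.
  by move=> u v Qu Qv; have := QL 1 u v Qu Qv; rewrite scale1r.
move=> j _; have QZ c u : Q u -> Q (c *: u).
  by move=> Qu; have := QL c u 0 Qu Q0; rewrite addr0.
exact: QZ.
Qed.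


Definition EP (p : C -> V) := exists K, IsP K p.

Lemma EP_add {p q} : EP p -> EP q -> EP (fun x => p x + q x).
Proof.
move=> [K1 H1] [K2 H2]; exists (maxn K1 K2).
by apply: IsP_add; apply: IsP_mono H1 || apply: IsP_mono H2; rewrite ?leq_maxl ?leq_maxr.
Qed.

Lemma EP_scale c {p} : EP p -> EP (fun x => c *: p x).
Proof. by move=> [K H]; exists K; apply: IsP_scale. Qed.

Lemma EP_sum n (F : 'I_n -> C -> V) : (forall i, EP (F i)) ->
  EP (fun x => \sum_(i < n) F i x).
Proof.
elim: n F => [|n IH] F H.
  by exists 0%N; apply: IsP_ext (IsP_zero 0) _ => x; rewrite big_ord0.
have [K1 H1] := IH (fun i => F (widen_ord (leqnSn n) i)) (fun i => H _).
have [K2 H2] := EP_add (ex_intro _ K1 H1) (H ord_max).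
by exists K2; apply: IsP_ext H2 _ => x; rewrite big_ord_recr.
Qed.

Lemma uniformize G (P : nat -> nat -> Prop) :
  (forall i N M, (N <= M)%N -> P i N -> P i M) -> (forall i, exists N, P i N) ->
  exists N, forall i, (i < G)%N -> P i N.
Proof.
move=> Hm H; elim: G => [|G [N HN]]; first by exists 0%N.
have [M HM] := H G; exists (maxn N M) => i; rewrite ltnS leq_eqVlt => /orP [/eqP -> |iG].
  by apply: Hm HM; rewrite leq_maxr.
by apply: Hm (HN i iG); rewrite leq_maxl.
Qed.

Lemma coefP_ext N p q i : (forall x, p x = q x) -> coefP N p i = coefP N q i.
Proof. by move=> E; rewrite /coefP; apply: eq_bigr => j _; rewrite E. Qed.

Lemma coefP_lin N c p q i :
  coefP N (fun x => c *: p x + q x) i = c *: coefP N p i + coefP N q i.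
Proof.
rewrite /coefP scaler_sumr -big_split; apply: eq_bigr => j _.
by rewrite scalerDr !scalerA mulrC.
Qed.

Lemma coefP_map N h p i : linmap h -> coefP N (fun x => h (p x)) i = h (coefP N p i).
Proof.
by move=> Hh; rewrite /coefP lin_sum //; apply: eq_bigr => j _; rewrite linZ.
Qed.

Lemma coefP0 N i : coefP N (fun _ => 0) i = 0.
Proof. by rewrite /coefP big1 // => j _; rewrite scaler0. Qed.

Lemma EP_coefP N (P : C -> C -> V) i : (forall x, EP (P x)) ->
  EP (fun y => coefP N (fun x => P x y) i).
Proof. by move=> H; apply: EP_sum => j; apply: EP_scale. Qed.

Lemma lin_comp (h1 h2 : V -> V) : linmap h1 -> linmap h2 -> linmap (fun a => h1 (h2 a)).
Proof. by move=> H1 H2 c u v; rewrite H2 H1. Qed.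

Lemma lin_comb (h1 h2 : V -> V) e : linmap h1 -> linmap h2 -> linmap (fun a => h1 a - e *: h2 a).
Proof.
move=> H1 H2 c u v; rewrite H1 H2 scalerDr scalerBr !scalerA mulrC.
rewrite opprD addrACA; congr (_ + _); by rewrite -scalerA scalerBr.
Qed.

Lemma comb4 (c1 c2 S e : C) (Y1 Y2 : V) : c1 = S * e -> S = e * c2 ->
  c1 *: Y1 - e *: (c2 *: Y2) + S *: (Y2 - e *: Y1) = 0.
Proof.
move=> -> ->; rewrite scalerBr !scalerA.
by rewrite addrC addrA subrK subrr.
Qed.

Lemma sgn_id1 (pa pf pg : bool) :
  sgn C (pf && addb pa pg) * sgn C (pg && pa) = sgn C (addb pf pg && pa) * sgn C (pf && pg).
Proof.
by case: pa; case: pf; case: pg; rewrite /sgn /= ?(expr0, expr1, mulr1, mul1r, mulrNN).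
Qed.

Lemma sgn_id2 (pa pf pg : bool) :
  sgn C (addb pf pg && pa) = sgn C (pf && pg) * (sgn C (pg && addb pa pf) * sgn C (pf && pa)).
Proof.
by case: pa; case: pf; case: pg; rewrite /sgn /= ?(expr0, expr1, mulr1, mul1r, mulrNN).
Qed.

Lemma IsP_evshift (s : seq V) c : IsP (size s) (fun y => ev s (y - c)).
Proof.
rewrite /ev; apply: IsP_sum => i; apply: IsP_mono (IsP_shiftn c i (IsP_const _)).
by rewrite add1n ltn_ord.
Qed.

Lemma IsP_evcshift (s : seq V) c : IsP (size s) (fun x => ev s (c - x)).
Proof.
rewrite /ev; apply: IsP_sum => i; apply: IsP_mono (IsP_cshiftn c i (IsP_const _)).
by rewrite add1n ltn_ord.
Qed.

Variables (d alpha beta : V -> V) (par : bool -> V -> Prop) (br : V -> V -> seq V).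
Hypothesis HR : isBiHomLCSA d alpha beta par br.

Lemma dlin : linmap d. Proof. by case: (bh_d HR). Qed.
Lemma alin : linmap alpha. Proof. by case: (bh_alpha HR). Qed.
Lemma blin : linmap beta. Proof. by case: (bh_beta HR). Qed.
Lemma apar {p v} : par p v -> par p (alpha v). Proof. by case: (bh_alpha HR) => _; apply. Qed.
Lemma bpar {p v} : par p v -> par p (beta v). Proof. by case: (bh_beta HR) => _; apply. Qed.
Lemma par0 p : par p 0. Proof. by case: (bh_graded HR). Qed.
Lemma parL {p} c {u v} : par p u -> par p v -> par p (c *: u + v).
Proof. by case: (bh_graded HR) => _ H _ _; apply: H. Qed.
Lemma parD {p u v} : par p u -> par p v -> par p (u + v).
Proof. by move=> Hu Hv; have := parL 1 Hu Hv; rewrite scale1r. Qed.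
Lemma parZ {p} c {u} : par p u -> par p (c *: u).
Proof. by move=> Hu; have := parL c Hu (par0 p); rewrite addr0. Qed.

Lemma par_ev q (s : seq V) x : (forall n, par q s`_n) -> par q (ev s x).
Proof.
move=> H; rewrite /ev; elim/big_ind: _; first exact: par0.
  by move=> u v; apply: parD.
by move=> i _; apply: parZ.
Qed.

Lemma conf_lmap {p h} x : conf_lin d par p h -> linmap (fun a => ev (h a) x).
Proof. by case=> H _ _ c u v; exact: H. Qed.

Lemma conf_d {p h} a x : conf_lin d par p h -> ev (h (d a)) x = d (ev (h a) x) + x *: ev (h a) x.
Proof. by case=> _ H _; apply: H. Qed.

Lemma conf_par {p h q a} x : conf_lin d par p h -> par q a -> par (addb q p) (ev (h a) x).
Proof. by case=> _ _ H Ha; apply: par_ev => n; apply: H. Qed.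

Lemma alpha_iterb n v : alpha (iter n beta v) = iter n beta (alpha v).
Proof. by elim: n => //= n <-; rewrite (bh_ab HR). Qed.

Lemma iter_comm m n v : iter m alpha (iter n beta v) = iter n beta (iter m alpha v).
Proof. by elim: m => //= m ->; rewrite alpha_iterb. Qed.

Lemma abpow_comp k l s t v :
  abpow alpha beta s t (abpow alpha beta k l v) = abpow alpha beta (k + s) (l + t) v.
Proof.
by rewrite /abpow -(iter_comm k t) -!iterD (addnC s k) (addnC t l).
Qed.

Lemma abpow_par {m n q v} : par q v -> par q (abpow alpha beta m n v).
Proof.
move=> H; rewrite /abpow; elim: m => /=; last by move=> m IH; apply: apar.
by elim: n => //= n IH; apply: bpar.
Qed.

Lemma om_abpow {p h} m n a x : in_Omega d alpha beta par p h ->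
  ev (h (abpow alpha beta m n a)) x = abpow alpha beta m n (ev (h a) x).
Proof.
case=> _ Hc; rewrite /abpow; elim: m => /=; last by move=> m IH; rewrite (Hc _ x).1 IH.
by elim: n => //= n IH; rewrite (Hc _ x).2 IH.
Qed.

Variables (k l s t : nat) (pf pg : bool) (f g : V -> seq V).
Hypothesis Hf : quasicentroid d alpha beta par br k l pf f.
Hypothesis Hg : quasicentroid d alpha beta par br s t pg g.

Local Notation gc a x y := (gc_br_ev pf pg f g a x y).

Lemma fconf : conf_lin d par pf f. Proof. by case: Hf => [[]]. Qed.
Lemma gconf : conf_lin d par pg g. Proof. by case: Hg => [[]]. Qed.
Lemma fcom : commutes_ab alpha beta f. Proof. by case: Hf => [[]]. Qed.
Lemma gcom : commutes_ab alpha beta g. Proof. by case: Hg => [[]]. Qed.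

Lemma gc_lin x y : linmap (fun a => gc a x y).
Proof.
rewrite /gc_br_ev; apply: lin_comb.
  exact: (lin_comp (fun u => ev (f u) x) (fun a => ev (g a) (y - x))
          (conf_lmap x fconf) (conf_lmap (y - x) gconf)).
exact: (lin_comp (fun u => ev (g u) (y - x)) (fun a => ev (f a) x)
          (conf_lmap (y - x) gconf) (conf_lmap x fconf)).
Qed.

Lemma gc_d a x y : gc (d a) x y = d (gc a x y) + y *: gc a x y.
Proof.
have Lf := conf_lmap x fconf; have Lg := conf_lmap (y - x) gconf.
rewrite /gc_br_ev (conf_d _ _ gconf) (conf_d _ _ fconf).
rewrite (linD Lf) (linZ Lf) (linD Lg) (linZ Lg).
rewrite (conf_d _ _ fconf) (conf_d _ _ gconf).
set F := ev (f _) x; set G := ev (g _) (y - x).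
rewrite (linB dlin) (linZ dlin).
have E : forall W : V, x *: W + (y - x) *: W = y *: W.
  by move=> W; rewrite -scalerDl addrC subrK.
rewrite -(addrA (d F)) E -(addrA (d G)) (addrC ((y - x) *: G)) E.
rewrite scalerBr !scalerDr !scalerA (mulrC y).
by rewrite opprD addrACA.
Qed.

Lemma gc_alpha a x y : gc (alpha a) x y = alpha (gc a x y).
Proof.
rewrite /gc_br_ev (gcom _ _).1 (fcom _ _).1 (fcom _ _).1 (gcom _ _).1.
by rewrite (linB alin) (linZ alin).
Qed.

Lemma gc_beta a x y : gc (beta a) x y = beta (gc a x y).
Proof.
rewrite /gc_br_ev (gcom _ _).2 (fcom _ _).2 (fcom _ _).2 (gcom _ _).2.
by rewrite (linB blin) (linZ blin).
Qed.

Lemma gc_par q a x y : par q a -> par (addb q (addb pf pg)) (gc a x y).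
Proof.
move=> Ha; rewrite /gc_br_ev addrC -scaleNr; apply: parL.
  have -> : addb q (addb pf pg) = addb (addb q pf) pg by clear Ha; case: q; case: pf; case: pg.
  by apply: (conf_par _ gconf); apply: (conf_par _ fconf).
have -> : addb q (addb pf pg) = addb (addb q pg) pf by clear Ha; case: q; case: pf; case: pg.
by apply: (conf_par _ fconf); apply: (conf_par _ gconf).
Qed.

Lemma gc_EPy a x : EP (fun y => gc a x y).
Proof.
rewrite /gc_br_ev.
have H1 := IsP_lin (conf_lmap x fconf) (IsP_evshift (g a) x).
have H2 := IsP_evshift (g (ev (f a) x)) x.
have E1 : EP (fun y => ev (f (ev (g a) (y - x))) x) by exists (size (g a)).
have E2 : EP (fun y => ev (g (ev (f a) x)) (y - x)) by exists (size (g (ev (f a) x))).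
have [K HK] := EP_add E1 (EP_scale (- sgn C (pf && pg)) E2).
by exists K; apply: IsP_ext HK _ => y /=; rewrite scaleNr.
Qed.

Lemma gc_EPx v : exists N, forall y, IsP N (fun x => gc v x y).
Proof.
pose n1 := size (g v); pose u i := (g v)`_i.
pose B1 := (n1 + \max_(i < n1) size (f (u i)))%N.
pose n2 := size (f v); pose z m := (f v)`_m.
pose B2 := (n2 + \max_(m < n2) size (g (z m)))%N.
exists (maxn B1 B2) => y.
have H1 : IsP B1 (fun x => ev (f (ev (g v) (y - x))) x).
  apply: IsP_ext (IsP_sum (fun (i : 'I_n1) x => (y - x) ^+ i *: ev (f (u i)) x) _) _.
    move=> i; apply: IsP_mono (IsP_cshiftn y i (IsP_ev (f (u i)))).
    rewrite /B1 addnC; apply: leq_add; first exact: ltnW (ltn_ord i).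
    exact: (@leq_bigmax _ (fun i : 'I_n1 => size (f (u i))) i).
  move=> x /=.
  have -> : ev (g v) (y - x) = \sum_(i < n1) (y - x) ^+ i *: u i by [].
  rewrite (lin_sum (conf_lmap x fconf)); apply: eq_bigr => i _.
  by rewrite (linZ (conf_lmap x fconf)).
have H2 : IsP B2 (fun x => ev (g (ev (f v) x)) (y - x)).
  apply: IsP_ext (IsP_sum (fun (m : 'I_n2) x => x ^+ m *: ev (g (z m)) (y - x)) _) _.
    move=> m; apply: IsP_mono (IsP_ext (IsP_shiftn 0 m (IsP_evcshift (g (z m)) y)) _).
      rewrite /B2 addnC; apply: leq_add; first exact: ltnW (ltn_ord m).
      exact: (@leq_bigmax _ (fun i : 'I_n2 => size (g (z i))) m).
    by move=> x; rewrite subr0.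
  move=> x /=.
  have -> : ev (f v) x = \sum_(m < n2) x ^+ m *: z m by [].
  rewrite (lin_sum (conf_lmap (y - x) gconf)); apply: eq_bigr => i _.
  by rewrite (linZ (conf_lmap (y - x) gconf)).
apply: IsP_ext (IsP_add (IsP_mono (leq_maxl B1 B2) H1)
   (IsP_scale (- sgn C (pf && pg)) (IsP_mono (leq_maxr B1 B2) H2))) _.
by move=> x; rewrite /gc_br_ev scaleNr.
Qed.

Lemma gc_iter v N : (forall y, IsP N (fun x => gc v x y)) ->
  forall m y, IsP N (fun x => gc (iter m d v) x y).
Proof.
move=> H; elim=> // m IH y /=.
apply: IsP_ext (IsP_add (IsP_lin dlin (IH y)) (IsP_scale y (IH y))) _.
by move=> x; rewrite gc_d.
Qed.

Lemma gc_unif : fin_gen d -> exists N, forall a y, IsP N (fun x => gc a x y).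
Proof.
case=> gens Hgens.
have [N HN] := uniformize (size gens) (fun i N => forall y, IsP N (fun x => gc gens`_i x y))
  (fun i N M le H y => IsP_mono le (H y)) (fun i => gc_EPx gens`_i).
exists N => a y; have [ps ->] := Hgens a.
apply: IsP_ext (IsP_sum (fun (i : 'I_(size gens)) x => gc (poly_act d (ps i) gens`_i) x y) _) _.
  move=> i; rewrite /poly_act.
  apply: IsP_ext (IsP_sum (fun (m : 'I_(size (ps i))) x => (ps i)`_m *: gc (iter m d gens`_i) x y) _) _.
    by move=> m; apply: IsP_scale; apply: gc_iter; apply: HN.
  move=> x /=; rewrite (lin_sum (gc_lin x y)); apply: eq_bigr => m _.
  by rewrite (linZ (gc_lin x y)).
by move=> x /=; rewrite (lin_sum (gc_lin x y)).
Qed.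

Lemma L1 z x : linmap (fun u => ev (br u z) x).
Proof. by move=> c u v; apply: (bh_brl HR). Qed.
Lemma L2 z x : linmap (fun u => ev (br z u) x).
Proof. by move=> c u v; apply: (bh_brr HR). Qed.

Lemma core pa pb a b lam th mu : par pa a -> par pb b ->
  ev (br (gc a lam th) (abpow alpha beta (k + s) (l + t) b)) (th + mu)
  + sgn C (addb pf pg && pa) *:
      ev (br (abpow alpha beta (k + s) (l + t) a) (gc b lam th)) mu = 0.
Proof.
move=> Ha Hb.
have X1 : ev (br (ev (f (ev (g a) (th - lam))) lam) (abpow alpha beta (k + s) (l + t) b)) (th + mu)
  = (sgn C (pf && addb pa pg) * sgn C (pg && pa)) *:
     ev (br (abpow alpha beta (k + s) (l + t) a) (ev (g (ev (f b) lam)) (th - lam))) mu.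
  have eb : abpow alpha beta (k + s) (l + t) b = abpow alpha beta k l (abpow alpha beta s t b).
    by rewrite abpow_comp addnC (addnC t l).
  rewrite eb.
  rewrite (_ : th + mu = lam + (th + mu - lam)); last by rewrite [RHS]addrC subrK.
  rewrite (Hf.2 (addb pa pg) pb _ _ _ _ (conf_par _ gconf Ha) (abpow_par Hb)).
  rewrite -(om_abpow k l a (th - lam) Hg.1) (om_abpow s t b lam Hf.1).
  rewrite (_ : th + mu - lam = th - lam + mu); last by rewrite addrAC.
  rewrite (Hg.2 pa (addb pb pf) _ _ _ _ (abpow_par Ha) (conf_par _ fconf Hb)).
  by rewrite scalerA abpow_comp.
have X2 : ev (br (ev (g (ev (f a) lam)) (th - lam)) (abpow alpha beta (k + s) (l + t) b)) (th + mu)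
  = (sgn C (pg && addb pa pf) * sgn C (pf && pa)) *:
     ev (br (abpow alpha beta (k + s) (l + t) a) (ev (f (ev (g b) (th - lam))) lam)) mu.
  rewrite -(abpow_comp k l s t b).
  rewrite (_ : th + mu = th - lam + (lam + mu)); last by rewrite addrA subrK.
  rewrite (Hg.2 (addb pa pf) pb _ _ _ _ (conf_par _ fconf Ha) (abpow_par Hb)).
  rewrite -(om_abpow s t a lam Hf.1) (om_abpow k l b (th - lam) Hg.1).
  rewrite (Hf.2 pa (addb pb pg) _ _ _ _ (abpow_par Ha) (conf_par _ gconf Hb)).
  by rewrite scalerA abpow_comp (addnC s k) (addnC t l).
rewrite /gc_br_ev (linB (L1 _ _)) (linZ (L1 _ _)) (linB (L2 _ _)) (linZ (L2 _ _)).
rewrite X1 X2; apply: comb4; first exact: sgn_id1.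
exact: sgn_id2.
Qed.

Definition hfun N i a := toseq (fun y => coefP N (fun x => gc a x y) i).

Lemma hfun_ev N i a y : ev (hfun N i a) y = coefP N (fun x => gc a x y) i.
Proof. by apply: toseq_ev; apply: (EP_coefP N (fun x y => gc a x y) i (fun x => gc_EPy a x)). Qed.

Lemma hfun_conf N i : conf_lin d par (addb pf pg) (hfun N i).
Proof.
split.
- move=> c a b y; rewrite !hfun_ev -coefP_lin; apply: coefP_ext => x.
  exact: gc_lin.
- move=> a y; rewrite !hfun_ev.
  transitivity (coefP N (fun x => y *: gc a x y + d (gc a x y)) i).
    by apply: coefP_ext => x; rewrite gc_d addrC.
  by rewrite coefP_lin (coefP_map N d (fun x => gc a x y) i dlin) addrC.
- move=> q a n Ha; apply: toseq_nth; first exact: par0.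
    by move=> c u v; apply: parL.
  move=> y; rewrite /coefP; elim/big_ind: _; first exact: par0.
    by move=> u v; apply: parD.
  by move=> j _; apply: parZ; apply: gc_par.
Qed.

Lemma hfun_com N i : commutes_ab alpha beta (hfun N i).
Proof.
move=> a y; rewrite !hfun_ev; split.
  rewrite -(coefP_map N alpha (fun x => gc a x y) i alin); apply: coefP_ext => x.
  exact: gc_alpha.
rewrite -(coefP_map N beta (fun x => gc a x y) i blin); apply: coefP_ext => x.
exact: gc_beta.
Qed.

Lemma zero_om p : in_Omega d alpha beta par p (fun _ => [::]).
Proof.
split; first split.
- by move=> c a b x; rewrite !ev_nil scaler0 addr0.
- by move=> a x; rewrite !ev_nil (lin0 dlin) scaler0 addr0.
- by move=> q a n _; rewrite nth_nil; apply: par0.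
by move=> a x; rewrite !ev_nil (lin0 alin) (lin0 blin).
Qed.

Lemma hfun_gen N i : gen_der d alpha beta par br (k + s) (l + t) (addb pf pg) (hfun N i).
Proof.
have Hom : in_Omega d alpha beta par (addb pf pg) (hfun N i).
  by split; [exact: hfun_conf | exact: hfun_com].
split => //; exists (hfun N i), (fun _ => [::]); split => //; first exact: zero_om.
move=> pa pb a b x y Ha Hb; rewrite ev_nil !hfun_ev.
rewrite -(coefP_map N _ (fun lam => gc a lam x) i (L1 (abpow alpha beta (k + s) (l + t) b) (x + y))).
rewrite -(coefP_map N _ (fun lam => gc b lam x) i (L2 (abpow alpha beta (k + s) (l + t) a) y)).
rewrite addrC -coefP_lin.
transitivity (coefP N (fun _ => 0) i); last exact: coefP0.
apply: (coefP_ext N _ _ i) => lam /=; rewrite addrC; exact: core Ha Hb.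
Qed.

Lemma main_sec : fin_gen d ->
  exists (n : nat) (h : nat -> V -> seq V),
    (forall i, (i < n)%N ->
       gen_der d alpha beta par br (k + s) (l + t) (addb pf pg) (h i)) /\
    (forall a x y, gc a x y = \sum_(i < n) x ^+ i *: ev (h i a) y).
Proof.
move=> Hfg; have [N HN] := gc_unif Hfg.
exists N, (hfun N); split => [i _|a x y]; first exact: hfun_gen.
by rewrite (interp _ _ (HN a y) x); apply: eq_bigr => i _; rewrite hfun_ev.
Qed.

End Gen.

Theorem mainTheorem13 (R : realType) (V : lmodType R[i])
  (d alpha beta : V -> V) (par : bool -> V -> Prop) (br : V -> V -> seq V)
  (HR : isBiHomLCSA d alpha beta par br) (Hfg : fin_gen d)
  (k l s t : nat) (pf pg : bool) (f g : V -> seq V)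
  (Hf : quasicentroid d alpha beta par br k l pf f)
  (Hg : quasicentroid d alpha beta par br s t pg g) :
  exists (n : nat) (h : nat -> V -> seq V),
    (forall i, (i < n)%N ->
       gen_der d alpha beta par br (k + s) (l + t) (addb pf pg) (h i)) /\
    (forall a x y, gc_br_ev pf pg f g a x y = \sum_(i < n) x ^+ i *: ev (h i a) y).
Proof.
exact: (@main_sec _ V d alpha beta par br HR k l s t pf pg f g Hf Hg Hfg).
Qed.
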